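(* Let $p$ be an odd prime, $\omega=e^{2\pi i/p}$, $m\ge1$, $Q=T_{(p^m)}$ and $K=K_Q(p)$. Every maximal $p$-torsion abelian subgroup of $K$ is either the subgroup $T_{(p)}$ or a subgroup of the form $\langle\omega\mathbbm{1},S_\xi X\rangle$ with $S_\xi\in Q$. Any two distinct maximal $p$-torsion abelian subgroups of $K$ intersect in the center $Z(K)=\langle\omega\mathbbm{1}\rangle$.
   Context: Let $\{|q\rangle:q\in\mathbb{Z}_p\}$ be the computational basis of $\mathbb{C}^p$ and $X|q\rangle=|q+1\rangle$. For $\xi:\mathbb{Z}_p\to U(1)$ let $S_\xi=\mathrm{diag}(\xi(0),\dots,\xi(p-1))$. $T=\{S_\xi:\prod_{q}\xi(q)=1\}$ and $T_{(p^k)}=\{S\in T:S^{p^k}=\mathbbm{1}\}$. $K_Q(p)$ is the subgroup of $SU(p)$ generated by all $S_\xi X^b$ with $S_\xi\in Q$, $b\in\mathbb{Z}_p$. A subgroup is $p$-torsion abelian if it is abelian and every element $M$ in it satisfies $M^p=\mathbbm{1}$; maximal refers to inclusion among such subgroups. *)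

(* Defs.v *)
From HB Require Import structures.
From mathcomp Require Import all_boot all_order all_algebra all_field.
Set Implicit Arguments. Unset Strict Implicit. Unset Printing Implicit Defensive.
Import Order.TTheory GRing.Theory Num.Theory.
Local Open Scope ring_scope.

(* Matrices acting on C^p, with complex entries taken in algC (all groups
   considered here consist of matrices with root-of-unity entries). *)
Definition mat (p : nat) := 'M[algC]_p.

Definition mset (p : nat) := mat p -> Prop.
Definition msub p (A B : mset p) := forall M, A M -> B M.
Definition meq p (A B : mset p) := forall M, A M <-> B M.

(* omega = e^{2 pi i / p}: p.-root (-1) is e^{i pi / p} (minimal argument) *)
Definition omega (p : nat) : algC := (p.-root (-1)) ^+ 2.

(* X |q> = |q+1 mod p> *)
Definition shiftX (p : nat) : mat p :=
  \matrix_(i, j) (((i : nat) == (j.+1 %% p)%N)%:R).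

Definition Sxi (p : nat) (xi : 'I_p -> algC) : mat p := diag_mx (\row_q xi q).

Definition Tset (p : nat) : mset p := fun S =>
  exists xi : 'I_p -> algC,
    S = Sxi xi /\ (forall q, `|xi q| = 1) /\ \prod_q xi q = 1.

Definition Tpow (p k : nat) : mset p := fun S =>
  Tset S /\ S ^+ (p ^ k) = 1%:M.

Definition is_subgroup p (H : mset p) :=
  [/\ H 1%:M,
      (forall A B, H A -> H B -> H (A *m B)) &
      (forall A, H A -> A \in unitmx /\ H (invmx A))].

Definition generated p (G : mset p) : mset p := fun M =>
  forall H, is_subgroup H -> msub G H -> H M.

Definition KQ p (Q : mset p) : mset p :=
  generated (fun M => exists S (b : 'I_p), Q S /\ M = S *m (shiftX p) ^+ b).

Definition abelian_set p (H : mset p) :=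
  forall A B, H A -> H B -> A *m B = B *m A.

Definition ptorsion p (H : mset p) := forall M, H M -> M ^+ p = 1%:M.

Definition pt_abelian_sub p (K H : mset p) :=
  [/\ is_subgroup H, msub H K, abelian_set H & ptorsion H].

Definition maximal_pt_abelian p (K H : mset p) :=
  pt_abelian_sub K H /\
  forall H', pt_abelian_sub K H' -> msub H H' -> msub H' H.

Definition center p (K : mset p) : mset p := fun M =>
  K M /\ forall N, K N -> M *m N = N *m M.

Definition scal_omega p : mset p := generated (fun M => M = (omega p)%:M).

Definition gen_omega_SX p (S : mat p) : mset p :=
  generated (fun M => M = (omega p)%:M \/ M = S *m shiftX p).

Arguments Tpow p k _ : clear implicits.
Arguments Tset p _ : clear implicits.
Arguments scal_omega p _ : clear implicits.

(* Main.v *)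
Require Import Defs.
From HB Require Import structures.
From mathcomp Require Import all_boot all_order all_algebra all_field.
Import Order.TTheory GRing.Theory Num.Theory.
From Stdlib Require Import Classical.
Local Open Scope ring_scope.
Set Implicit Arguments. Unset Strict Implicit. Unset Printing Implicit Defensive.

Lemma omega_prim p : prime p -> odd p -> p.-primitive_root (omega p).
Proof.
move=> pp op; have p1 : (1 < p)%N by apply: prime_gt1.
have p0 : (0 < p)%N by apply: ltnW.
rewrite /omega; set r := (X in X ^+ 2).
have rp : r ^+ p = -1 by rewrite /r rootCK.
have om : (r ^+ 2) ^+ p = 1 by rewrite -exprM mulnC exprM rp sqrrN expr1n.
have rN1 : r != -1.
  apply/eqP => e; have := rootC_lt0 (-1 : algC) p1; rewrite -/r e.
  by rewrite ltrN10.
have r1 : r != 1.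
  apply/eqP => e; move: rp; rewrite e expr1n => /eqP.
  by rewrite -subr_eq0 opprK -(natrD _ 1 1) pnatr_eq0.
have w1 : r ^+ 2 != 1 by rewrite sqrf_eq1 negb_or r1 rN1.
have [z zp] := C_prim_root_exists p0.
have [k ek] := prim_rootP zp om.
have k0 : (k : nat) != 0%N by apply: contra w1; move/eqP=> k0; rewrite ek k0 expr0.
have := exp_prim_root zp k; rewrite -ek.
suff -> : gcdn k p = 1%N by rewrite divn1.
have : coprime p k by rewrite prime_coprime //; apply/negP => /dvdn_leq; rewrite lt0n k0 leqNgt ltn_ord => /(_ isT).
by rewrite /coprime gcdnC => /eqP.
Qed.

Definition E n (xi : 'I_n.+2 -> algC) (b : 'I_n.+2) : 'M[algC]_n.+2 :=
  \matrix_(i, j) (xi i * (i == j + b)%:R).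

Lemma E_mul n xi eta (b c : 'I_n.+2) :
  E xi b *m E eta c = E (fun i => xi i * eta (i - b)) (c + b).
Proof.
apply/matrixP => i k; rewrite !mxE (bigD1 (k + c)) //= big1; last first.
  by move=> j jn; rewrite !mxE (negbTE jn) /= mulr0 mulr0.
rewrite !mxE eqxx mulr1 addr0 addrA.
case: eqP => [->|_]; last by rewrite !mulr0 mul0r.
by rewrite addrK !mulr1.
Qed.

Lemma E_entry n xi (b j : 'I_n.+2) : E xi b (j + b) j = xi (j + b).
Proof. by rewrite mxE eqxx mulr1. Qed.

Lemma E_eq n (xi eta : 'I_n.+2 -> algC) (b c : 'I_n.+2) :
  (forall i, xi i != 0) -> E xi b = E eta c -> b = c /\ forall i, xi i = eta i.
Proof.
move=> nz e.
have bc : b = c.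
  have := E_entry xi b 0; rewrite e mxE !add0r => h.
  apply/eqP; case: eqP => // bc; move: (nz b); rewrite -h.
  by move/eqP: bc => /negbTE -> /=; rewrite mulr0 eqxx.
rewrite -bc in e *; split=> // i.
have h := E_entry eta b (i - b); rewrite -e E_entry subrK in h.
by rewrite h.
Qed.

Lemma eq_E n (xi eta : 'I_n.+2 -> algC) b : (forall i, xi i = eta i) -> E xi b = E eta b.
Proof. by move=> h; apply/matrixP => i j; rewrite !mxE h. Qed.

Lemma E1 n : 1%:M = E (fun _ => 1) (0 : 'I_n.+2).
Proof. by apply/matrixP => i j; rewrite !mxE addr0 mul1r. Qed.

Lemma E1r n : (1 : 'M[algC]_n.+2) = E (fun _ => 1) (0 : 'I_n.+2).
Proof. exact: E1. Qed.

Lemma Sxi_E n xi : Sxi xi = E xi (0 : 'I_n.+2).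
Proof. by apply/matrixP => i j; rewrite !mxE addr0 mulr_natr. Qed.

Lemma shiftX_E n : shiftX n.+2 = E (fun _ => 1) 1.
Proof.
apply/matrixP => i j; rewrite !mxE mul1r; congr (_%:R).
by rewrite -[i == j + 1]val_eqE /= modnDmr addn1.
Qed.

Lemma E_exp0 n xi k : E xi (0 : 'I_n.+2) ^+ k = E (fun i => xi i ^+ k) 0.
Proof.
elim: k => [|k IH]; first by rewrite expr0 E1r; apply: eq_E => i; rewrite expr0.
by rewrite exprS -mulmxE IH E_mul addr0; apply: eq_E => i; rewrite subr0 exprS.
Qed.

Lemma shiftX_exp n k : shiftX n.+2 ^+ k = E (fun _ => 1) (k%:R).
Proof.
elim: k => [|k IH]; first by rewrite expr0 E1r.
rewrite exprS -mulmxE IH shiftX_E E_mul mulr1 -natr1 addrC; congr E.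
Qed.

Lemma inv_of p (A B : mat p) : A *m B = 1%:M -> A \in unitmx /\ invmx A = B.
Proof.
move=> e; have [uA _] := mulmx1_unit e; split=> //.
by rewrite -(mulKmx uA B) e mulmx1.
Qed.

Lemma sub_exp p (H : mset p) A k : is_subgroup H -> H A -> H (A ^+ k).
Proof.
case=> H1 HM _ HA; elim: k => [|k IH]; first by rewrite expr0.
by rewrite exprS -mulmxE; apply: HM.
Qed.

Lemma gen_sub p (G : mset p) : (forall A, G A -> A \in unitmx) -> is_subgroup (generated G).
Proof.
move=> uG; split.
- by move=> H [].
- by move=> A B hA hB H sH sGH; case: (sH) => _ HM _; apply: HM; [apply: hA|apply: hB].
move=> A hA; split.
  pose U : mset p := fun M => M \in unitmx.
  have sU : is_subgroup U.
    split; first by rewrite /U unitmx1.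
    - by move=> X Y; rewrite /U unitmx_mul => -> ->.
    - by move=> X; rewrite /U unitmx_inv => ->.
  exact: (hA U sU uG).
by move=> H sH sGH; case: (sH) => _ _ HI; case: (HI A (hA H sH sGH)).
Qed.

Lemma gen_incl p (G : mset p) : msub G (generated G).
Proof. by move=> M gM H _ sGH; apply: sGH. Qed.

Lemma gen_min p (G H : mset p) : is_subgroup H -> msub G H -> msub (generated G) H.
Proof. by move=> sH sGH M gM; apply: gM. Qed.

Definition Qc n m (xi : 'I_n.+2 -> algC) :=
  [/\ forall q, `|xi q| = 1, \prod_q xi q = 1 & forall q, xi q ^+ (n.+2 ^ m) = 1].

Arguments Qc : clear implicits.

Definition Kset n m : mset n.+2 := fun M => exists xi b, Qc n m xi /\ M = E xi b.
Arguments Kset : clear implicits.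

Lemma Qc_nz n m xi i : Qc n m xi -> xi i != 0.
Proof. by case=> h _ _; apply/eqP => e; have := h i; rewrite e normr0 => /eqP; rewrite eq_sym oner_eq0. Qed.

Lemma Qc1 n m : Qc n m (fun _ => 1).
Proof. by split=> *; rewrite ?normr1 ?prodr_const ?expr1n. Qed.

Lemma Qc_mul n m xi eta (b : 'I_n.+2) : Qc n m xi -> Qc n m eta ->
  Qc n m (fun i => xi i * eta (i - b)).
Proof.
case=> [n1 p1 e1] [n2 p2 e2]; split.
- by move=> q; rewrite normrM n1 n2 mulr1.
- rewrite big_split /= p1 mul1r -[RHS]p2; apply: esym.
  rewrite (reindex_inj (h := fun i => i - b)) //; exact: addIr.
- by move=> q; rewrite exprMn e1 e2 mulr1.
Qed.

Lemma Qc_inv n m xi (b : 'I_n.+2) : Qc n m xi -> Qc n m (fun i => (xi (i + b))^-1).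
Proof.
case=> [n1 p1 e1]; split.
- by move=> q; rewrite normfV n1 invr1.
- rewrite prodfV -[RHS]invr1 -[in RHS]p1; congr (_^-1); apply: esym.
  rewrite (reindex_inj (h := fun i => i + b)) //; exact: addIr.
- by move=> q; rewrite exprVn e1 invr1.
Qed.

Lemma E_inv n (xi : 'I_n.+2 -> algC) b : (forall i, xi i != 0) ->
  E xi b *m E (fun i => (xi (i + b))^-1) (-b) = 1%:M.
Proof.
move=> nz; rewrite E_mul addNr E1; apply: eq_E => i.
by rewrite subrK mulfV.
Qed.

Lemma Kset_sub n m : is_subgroup (Kset n m).
Proof.
split.
- by exists (fun _ => 1), 0; split; [apply: Qc1|apply: E1].
- move=> _ _ [xi [b [q1 ->]]] [eta [c [q2 ->]]].
  by exists (fun i => xi i * eta (i - b)), (c + b); split; [apply: Qc_mul|apply: E_mul].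
move=> _ [xi [b [q1 ->]]].
have [u ->] := inv_of (E_inv b (fun i => Qc_nz i q1)); split=> //.
by exists (fun i => (xi (i + b))^-1), (-b); split=> //; apply: Qc_inv.
Qed.

Lemma Tpow_E n k S : Tpow n.+2 k S <-> exists xi, Qc n k xi /\ S = E xi 0.
Proof.
split.
- case=> [[xi [-> [n1 p1]]]] ex; exists xi; split; last exact: Sxi_E.
  split=> // q; move: ex; rewrite Sxi_E E_exp0 E1 => /E_eq [].
    by move=> i; rewrite expf_neq0 //; apply/eqP => e; have := n1 i; rewrite e normr0 => /eqP; rewrite eq_sym oner_eq0.
  by move=> _ ->.
case=> xi [[n1 p1 e1] ->]; split; first by exists xi; rewrite Sxi_E.
by rewrite E_exp0 E1; apply: eq_E.
Qed.

Lemma K_Kset n m : meq (KQ (Tpow n.+2 m)) (Kset n m).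
Proof.
have gK : msub (fun M => exists S (b : 'I_n.+2), Tpow n.+2 m S /\ M = S *m (shiftX n.+2) ^+ b) (Kset n m).
  move=> _ [S [b [/Tpow_E [xi [q ->]] ->]]].
  exists xi, (b%:R); split=> //; rewrite shiftX_exp E_mul addr0; apply: eq_E => i.
  by rewrite mulr1.
move=> M; split; first by apply: gen_min => //; apply: Kset_sub.
case=> xi [b [q ->]]; apply: gen_incl; exists (E xi 0), b; split.
  by apply/Tpow_E; exists xi.
by rewrite shiftX_exp natr_Zp E_mul addr0; apply: eq_E => i; rewrite mulr1.
Qed.


Lemma Zp_val n j : val (j%:R : 'I_n.+2) = (j %% n.+2)%N.
Proof. by rewrite Zp_nat. Qed.

Lemma Zp_p n : (n.+2%:R : 'I_n.+2) = 0.
Proof. by apply: val_inj; rewrite [LHS]Zp_val modnn. Qed.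

Lemma exp_mod n (g : 'M[algC]_n.+2) j : g ^+ n.+2 = 1 -> g ^+ j = g ^+ (j %% n.+2).
Proof.
move=> gp; rewrite {1}(divn_eq j n.+2) exprD mulnC exprM gp expr1n mul1r //.
Qed.

Lemma Zp_inv n (c : 'I_n.+2) : prime n.+2 -> c != 0 -> exists k : nat, c * k%:R = 1.
Proof.
move=> pp c0; have cu : c \is a GRing.unit.
  rewrite -[c]natr_Zp (unitZpE _ (isT : (1 < n.+2)%N)) prime_coprime //.
  apply/negP => /dvdn_leq h.
  have : (n.+2 <= c)%N by apply: h; rewrite lt0n; apply: contra c0 => /eqP e; apply/eqP/val_inj.
  by rewrite leqNgt ltn_ord.
by exists (val c^-1); rewrite natr_Zp mulrV.
Qed.

Lemma Zp_nat_inv n j : prime n.+2 -> (j%:R : 'I_n.+2) != 0 -> exists k : nat, ((j * k) %% n.+2 = 1)%N.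
Proof.
move=> pp /(Zp_inv pp) [k e]; exists k; rewrite -Zp_val natrM e //.
Qed.

Definition Dset n (c g : 'M[algC]_n.+2) : mset n.+2 := fun M => exists a j : nat, M = c ^+ a * g ^+ j.

Lemma Dset_props n (c g : 'M[algC]_n.+2) : GRing.comm c g -> c ^+ n.+2 = 1 -> g ^+ n.+2 = 1 ->
  [/\ is_subgroup (Dset c g), abelian_set (Dset c g), ptorsion (Dset c g),
      Dset c g c & Dset c g g].
Proof.
move=> cg cp gp.
have cgX a j : GRing.comm (c ^+ a) (g ^+ j) by apply: commrX; apply: commr_sym; apply: commrX; apply: commr_sym.
have mulD a j b k : (c ^+ a * g ^+ j) * (c ^+ b * g ^+ k) = c ^+ (a + b) * g ^+ (j + k).
  by rewrite mulrA -(mulrA (c ^+ a)) -(cgX b j) mulrA -exprD -mulrA -exprD.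
split.
- split; first by exists 0%N, 0%N; rewrite !expr0 mulr1.
  + by move=> _ _ [a [j ->]] [b [k ->]]; exists (a + b)%N, (j + k)%N; rewrite mulmxE mulD.
  move=> _ [a [j ->]].
  have [u ->] : (c ^+ a * g ^+ j) \in unitmx /\ invmx (c ^+ a * g ^+ j) = c ^+ (a * n.+1) * g ^+ (j * n.+1).
    apply: inv_of; rewrite mulmxE mulD -!mulnS !(mulnC _ n.+2) !exprM cp gp !expr1n mulr1 //.
  by split=> //; exists (a * n.+1)%N, (j * n.+1)%N.
- by move=> _ _ [a [j ->]] [b [k ->]]; rewrite !mulmxE !mulD addnC (addnC j).
- move=> _ [a [j ->]]; rewrite exprMn_comm // -!exprM !(mulnC _ n.+2) !exprM cp gp !expr1n mulr1 //.
- by exists 1%N, 0%N; rewrite expr1 expr0 mulr1.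
- by exists 0%N, 1%N; rewrite expr1 expr0 mul1r.
Qed.

Lemma scal_exp n (x : algC) k : (x%:M : 'M[algC]_n.+2) ^+ k = (x ^+ k)%:M.
Proof.
elim: k => [|k IH]; first by rewrite !expr0.
by rewrite exprS IH -mulmxE -scalar_mxM exprS.
Qed.

Lemma scal_E n (x : algC) : (x%:M : 'M[algC]_n.+2) = E (fun _ => x) 0.
Proof. by apply/matrixP => i j; rewrite !mxE addr0 mulr_natr. Qed.

Lemma root_norm n (z : algC) : z ^+ n.+2 = 1 -> `|z| = 1.
Proof.
move=> e; apply/eqP; rewrite -(pexpr_eq1 (isT : (0 < n.+2)%N)) ?normr_ge0 //.
by rewrite -normrX e normr1.
Qed.

Lemma Qc_root n m (z : algC) : (0 < m)%N -> z ^+ n.+2 = 1 -> Qc n m (fun _ => z).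
Proof.
case: m => // m _ e; split.
- by move=> q; apply: root_norm e.
- by rewrite prodr_const card_ord.
- by move=> q; rewrite expnS exprM e expr1n.
Qed.

Lemma Zp10 n : (1 : 'I_n.+2) != 0.
Proof.
by apply/eqP => /(congr1 val) /=; rewrite modn_small.
Qed.

Lemma comm_const n (zeta xi : 'I_n.+2 -> algC) :
  (forall i, zeta i != 0) -> (forall i, xi i != 0) ->
  E zeta 0 *m E xi 1 = E xi 1 *m E zeta 0 -> forall i, zeta i = zeta 0.
Proof.
move=> nz nx; rewrite !E_mul addr0 add0r => /E_eq [].
  by move=> i; rewrite mulf_neq0.
move=> _ h.
have s i : zeta i = zeta (i - 1).
  by have := h i; rewrite subr0 mulrC => /(mulfI (nx i)).
have k0 k : zeta (k%:R) = zeta 0.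
  elim: k => [|k IH] //; rewrite s -natr1 addrK //.
by move=> i; rewrite -[i]natr_Zp k0.
Qed.

Definition etaf n (w : algC) : 'I_n.+2 -> algC :=
  fun i => if i == 0 then w else if i == 1 then w ^+ n.+1 else 1.

Arguments etaf : clear implicits.

Lemma Qc_eta n m (w : algC) : (0 < m)%N -> w ^+ n.+2 = 1 -> Qc n m (etaf n w).
Proof.
move=> m0 wp; have [n1 _ e1] := Qc_root m0 wp; split.
- move=> q; rewrite /etaf; case: ifP => _; first exact: n1 q.
  by case: ifP => _; rewrite ?normrX ?(n1 q) ?expr1n ?normr1.
- rewrite (bigD1 0) //= (bigD1 1) //=.
  rewrite big1; last by move=> i /andP [i0 i1]; rewrite /etaf (negbTE i0) (negbTE i1).
  by rewrite /etaf eqxx (negbTE (Zp10 n)) eqxx mulr1 -exprS.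
- move=> q; rewrite /etaf; case: ifP => _; first exact: e1 q.
  by case: ifP => _; rewrite ?expr1n // -exprM mulnC exprM (e1 q) expr1n.
Qed.

Lemma eta_noncomm n (w : algC) (xi : 'I_n.+2 -> algC) b :
  (n.+2).-primitive_root w -> odd n.+2 -> b != 0 -> (forall i, xi i != 0) ->
  E xi b *m E (etaf n w) 0 <> E (etaf n w) 0 *m E xi b.
Proof.
move=> wpr op b0 nx.
have w0 : w != 0.
  apply/eqP => e; move: (prim_expr_order wpr); rewrite e expr0n /= => /eqP.
  by rewrite eq_sym oner_eq0.
have ne i : etaf n w i != 0.
  by rewrite /etaf; case: ifP => _ //; case: ifP => _; rewrite ?expf_neq0 ?oner_eq0.
rewrite !E_mul add0r addr0 => /E_eq [].
  by move=> i; rewrite mulf_neq0.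
move=> _ /(_ b); rewrite subrr subr0 mulrC => /(mulIf (nx b)).
rewrite /etaf eqxx (negbTE b0).
case: ifP => _ e.
  have := eq_prim_root_expr wpr 1 n.+1; rewrite expr1 -e eqxx => /esym.
  rewrite !modn_small // => /eqP [n0].
  by move: op; rewrite -n0.
have := eq_prim_root_expr wpr 1 0; rewrite expr1 expr0 e eqxx => /esym.
by rewrite mod0n modn_small.
Qed.

Lemma E_pow n m (xi : 'I_n.+2 -> algC) b k : Qc n m xi ->
  exists zeta, Qc n m zeta /\ E xi b ^+ k = E zeta (b *+ k).
Proof.
move=> q; elim: k => [|k [zeta [qz ek]]].
  by exists (fun _ => 1); split; [apply: Qc1|rewrite expr0 mulr0n E1r].
exists (fun i => zeta i * xi (i - b *+ k)); split; first exact: Qc_mul.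
by rewrite exprSr ek -mulmxE E_mul mulrS.
Qed.

Lemma scalar_of n m (w : algC) (zeta : 'I_n.+2 -> algC) :
  (n.+2).-primitive_root w -> Qc n m zeta -> (forall i, zeta i = zeta 0) ->
  exists a, E zeta 0 = (w%:M) ^+ a.
Proof.
move=> wpr [_ pz _] cz.
have : zeta 0 ^+ n.+2 = 1.
  by rewrite -pz (eq_bigr (fun _ => zeta 0)) ?prodr_const ?card_ord // => i _; rewrite cz.
move=> /(prim_rootP wpr) [a ea]; exists a.
by rewrite scal_exp scal_E; apply: eq_E => i; rewrite cz ea.
Qed.

Lemma Kset_unit n m M : Kset n m M -> M \in unitmx.
Proof. by move=> KM; have [_ _ /(_ M KM) []] := Kset_sub n m. Qed.

Lemma wp_scal n (w : algC) : (n.+2).-primitive_root w -> (w%:M : 'M[algC]_n.+2) ^+ n.+2 = 1.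
Proof. by move=> wpr; rewrite scal_exp (prim_expr_order wpr). Qed.

Lemma Kset_scal n m (w : algC) a : (0 < m)%N -> (n.+2).-primitive_root w ->
  Kset n m ((w%:M : 'M[algC]_n.+2) ^+ a).
Proof.
move=> m0 wpr; exists (fun _ => w ^+ a), 0; split; last by rewrite scal_exp scal_E.
by apply: Qc_root => //; rewrite -exprM mulnC exprM (prim_expr_order wpr) expr1n.
Qed.

Lemma SX_E n (xi : 'I_n.+2 -> algC) : E xi 0 *m shiftX n.+2 = E xi 1.
Proof. by rewrite shiftX_E E_mul addr0; apply: eq_E => i; rewrite mulr1. Qed.

Lemma T1_pt n m : (0 < m)%N -> pt_abelian_sub (Kset n m) (Tpow n.+2 1).
Proof.
move=> m0; split.
- split.
  + by apply/Tpow_E; exists (fun _ => 1); split; [apply: Qc1|apply: E1].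
  + move=> _ _ /Tpow_E [xi [q1 ->]] /Tpow_E [eta [q2 ->]]; apply/Tpow_E.
    exists (fun i => xi i * eta (i - 0)); split; first exact: Qc_mul.
    by rewrite E_mul addr0.
  + move=> _ /Tpow_E [xi [q1 ->]].
    have [u ->] := inv_of (E_inv 0 (fun i => Qc_nz i q1)); split=> //.
    apply/Tpow_E; exists (fun i => (xi (i + 0))^-1); split; first exact: Qc_inv.
    by rewrite oppr0.
- move=> M /Tpow_E [xi [[n1 p1 e1] ->]]; exists xi, 0; split=> //; split=> // q.
  by case: m m0 => // m _; rewrite expnS exprM -(expn1 n.+2) e1 expr1n.
- move=> _ _ /Tpow_E [xi [q1 ->]] /Tpow_E [eta [q2 ->]].
  by rewrite !E_mul; apply: eq_E => i; rewrite !subr0 mulrC.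
- by move=> M [_ e]; rewrite expn1 in e.
Qed.

Definition Gset n (xi : 'I_n.+2 -> algC) := gen_omega_SX (E xi 0).

Lemma G_props n m (xi : 'I_n.+2 -> algC) : (0 < m)%N -> prime n.+2 -> odd n.+2 -> Qc n m xi ->
  E xi 1 ^+ n.+2 = 1 ->
  pt_abelian_sub (Kset n m) (Gset xi) /\
  msub (Gset xi) (Dset ((omega n.+2)%:M) (E xi 1)).
Proof.
move=> m0 pp op q gp; have wpr := omega_prim pp op.
set c : 'M[algC]_n.+2 := (omega n.+2)%:M.
have cK : Kset n m c by rewrite -[c]expr1; apply: Kset_scal.
have gK : Kset n m (E xi 1) by exists xi, 1.
have cg : GRing.comm c (E xi 1) by rewrite /GRing.comm -!mulmxE scalar_mxC.
have [Dsub Dab Dpt Dc Dg] := Dset_props cg (wp_scal wpr) gp.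
have gens : forall M, M = (omega n.+2)%:M \/ M = E xi 0 *m shiftX n.+2 -> M = c \/ M = E xi 1.
  by move=> M; rewrite SX_E.

have GD : msub (Gset xi) (Dset c (E xi 1)).
  by apply: gen_min => // M /gens [->|->].
split=> //; split.
- by apply: gen_sub => M /gens [->|->]; [apply: (Kset_unit cK)|apply: (Kset_unit gK)].
- by apply: gen_min; [apply: Kset_sub|move=> M /gens [->|->]].
- by move=> A B /GD hA /GD hB; apply: Dab.
- by move=> A /GD hA; apply: Dpt.
Qed.

Lemma part1 n m H : (0 < m)%N -> prime n.+2 -> odd n.+2 ->
  maximal_pt_abelian (Kset n m) H ->
  meq H (Tpow n.+2 1) \/
  exists xi, [/\ Qc n m xi, E xi 1 ^+ n.+2 = 1 & meq H (Gset xi)].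
Proof.
move=> m0 pp op [[sH HK ab pt] mx].
have wpr := omega_prim pp op.
have [H1 HM HI] := sH.
case: (classic (exists xi0 b0, [/\ H (E xi0 b0), Qc n m xi0 & b0 != 0])) =>
    [[xi0 [b0 [H0 q0 b00]]] | no].
- right.
  have [k ek] := Zp_inv pp b00.
  have [xi [q ex]] := E_pow b0 k q0.
  rewrite -mulr_natr ek in ex.
  have Hg : H (E xi 1) by rewrite -ex; apply: sub_exp.
  have gp : E xi 1 ^+ n.+2 = 1 by apply: pt.
  have [Gpt GD] := G_props m0 pp op q gp.
  have [[G1 GM GI] _ _ _] := Gpt.
  have HG : msub H (Gset xi).
    move=> M HM0; have [eta [d [qe eM]]] := HK M HM0.
    have [zeta [qz ez]] := E_pow 1 (n.+2 - d) q.
    have HN : H (M *m E xi 1 ^+ (n.+2 - d)) by apply: HM => //; apply: sub_exp.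
    have eN : M *m E xi 1 ^+ (n.+2 - d) = E (fun i => eta i * zeta (i - d)) 0.
      rewrite ez eM E_mul; congr E.
      by rewrite -[d in _ + d]natr_Zp -natrD subnK ?Zp_p // ltnW.
    have qN : Qc n m (fun i => eta i * zeta (i - d)) by apply: Qc_mul.
    have cN : forall i, eta i * zeta (i - d) = eta 0 * zeta (0 - d).
      apply: comm_const; [by move=> i; apply: Qc_nz qN|by move=> i; apply: Qc_nz q|].
      by rewrite -eN; apply: ab.
    have [a ea] := scalar_of wpr qN cN.
    have eM' : M = ((omega n.+2)%:M) ^+ a * E xi 1 ^+ d.
      rewrite -ea -eN mulmxE -mulrA -exprD subnK ?gp ?mulr1 //.
      exact: ltnW.
    have sG : is_subgroup (Gset xi) by case: Gpt.
    rewrite eM' -mulmxE; apply: GM; apply: (sub_exp _ sG); apply: gen_incl.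
      by left.
    by right; rewrite SX_E.
  exists xi; split=> // M; split; first exact: HG.
  exact: (mx _ Gpt HG).
- left.
  have HT : msub H (Tpow n.+2 1).
    move=> M HM0; have [xi [b [q eM]]] := HK M HM0.
    case: (eqVneq b 0) => [b0|b0]; last by exfalso; apply: no; exists xi, b; rewrite -eM.
    have := pt M HM0; rewrite eM b0 E_exp0 E1 => /E_eq [].
      by move=> i; rewrite expf_neq0 // (Qc_nz i q).
    move=> _ ep; apply/Tpow_E; exists xi; split=> //.
    by case: q => n1 p1 _; split=> // i; rewrite expn1 ep.
  move=> M; split; first exact: HT.
  exact: (mx _ (@T1_pt n m m0) HT).
Qed.

Lemma scal_char n : prime n.+2 -> odd n.+2 ->
  meq (scal_omega n.+2) (fun M => exists a, M = ((omega n.+2)%:M : 'M[algC]_n.+2) ^+ a).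
Proof.
move=> pp op; have wpr := omega_prim pp op.
set c : 'M[algC]_n.+2 := (omega n.+2)%:M.
have c1 : GRing.comm c 1 by rewrite /GRing.comm mulr1 mul1r.
have [Dsub _ _ Dc _] := Dset_props c1 (wp_scal wpr) (expr1n _ _).
have cu : c \in unitmx by case: Dsub => _ _ /(_ c Dc) [].
have GD : msub (scal_omega n.+2) (Dset c 1) by apply: gen_min => // N ->.
have sS : is_subgroup (scal_omega n.+2) by apply: gen_sub => N ->.
move=> M; split.
- by move=> /GD [a [j ->]]; exists a; rewrite expr1n mulr1.
- case=> a ->; apply: (sub_exp _ sS); exact: gen_incl.
Qed.

Lemma part2 n m : (0 < m)%N -> prime n.+2 -> odd n.+2 ->
  meq (center (Kset n m)) (scal_omega n.+2).
Proof.
move=> m0 pp op; have wpr := omega_prim pp op.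
move=> M; split.
- case=> [[xi [b [q eM]]] cM]; apply/(scal_char pp op).
  have Keta : Kset n m (E (etaf n (omega n.+2)) 0).
    by exists (etaf n (omega n.+2)), 0; split=> //; apply: Qc_eta => //; apply: prim_expr_order.
  case: (eqVneq b 0) => [b0|b0]; last first.
    exfalso; apply: (eta_noncomm wpr op b0 (fun i => Qc_nz i q)).
    by rewrite -eM; apply: cM.
  have KX : Kset n m (E (fun _ => 1) 1) by exists (fun _ => 1), 1; split=> //; apply: Qc1.
  have := cM _ KX; rewrite eM b0 => /comm_const h.
  have [] := scalar_of wpr q (h (fun i => Qc_nz i q) (fun _ => oner_neq0 _)).
  by move=> a ea; exists a.
- move=> /(scal_char pp op) [a ->]; split; first exact: Kset_scal.
  by move=> N _; rewrite scal_exp scalar_mxC.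
Qed.

Lemma G_elem n m (xi : 'I_n.+2 -> algC) M : (0 < m)%N -> prime n.+2 -> odd n.+2 -> Qc n m xi ->
  E xi 1 ^+ n.+2 = 1 -> Gset xi M ->
  exists a j zeta, [/\ M = ((omega n.+2)%:M) ^+ a * E xi 1 ^+ j, Qc n m zeta & M = E zeta (j%:R)].
Proof.
move=> m0 pp op q gp GM; have wpr := omega_prim pp op.
have [_ GD] := G_props m0 pp op q gp.
have [a [j eM]] := GD M GM.
have [zeta [qz ez]] := E_pow 1 j q.
exists a, j, (fun i => omega n.+2 ^+ a * zeta (i - 0)); split=> //.
  apply: Qc_mul => //; apply: Qc_root => //.
  by rewrite -exprM mulnC exprM (prim_expr_order wpr) expr1n.
by rewrite eM ez scal_exp scal_E -mulmxE E_mul addr0.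
Qed.

Lemma G_triv n (g c : 'M[algC]_n.+2) a j : g ^+ n.+2 = 1 -> (j%:R : 'I_n.+2) = 0 ->
  c ^+ a * g ^+ j = c ^+ a.
Proof.
move=> gp j0; rewrite (exp_mod j gp) -Zp_val j0 expr0 mulr1 //.
Qed.

Lemma G_incl n (xi : 'I_n.+2 -> algC) (H : mset n.+2) a j : prime n.+2 -> odd n.+2 ->
  E xi 1 ^+ n.+2 = 1 -> is_subgroup H -> H ((omega n.+2)%:M) ->
  H (((omega n.+2)%:M) ^+ a * E xi 1 ^+ j) -> (j%:R : 'I_n.+2) != 0 ->
  msub (Gset xi) H.
Proof.
move=> pp op gp sH Hc HM j0; have wpr := omega_prim pp op.
have [_ HMul _] := sH.
set c : 'M[algC]_n.+2 := (omega n.+2)%:M in Hc HM *.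
have Hgj : H (E xi 1 ^+ j).
  have -> : E xi 1 ^+ j = c ^+ (a * n.+1) * (c ^+ a * E xi 1 ^+ j).
    rewrite mulrA -exprD -mulnSr mulnC exprM (wp_scal wpr) expr1n mul1r //.
  rewrite -mulmxE; apply: HMul => //; exact: sub_exp.
have [k ek] := Zp_nat_inv pp j0.
have Hg : H (E xi 1).
  have -> : E xi 1 = (E xi 1 ^+ j) ^+ k by rewrite -exprM (exp_mod _ gp) ek expr1.
  exact: sub_exp.
by apply: gen_min => // N [->|->] //; rewrite SX_E.
Qed.

Lemma c_in_max n m H : (0 < m)%N -> prime n.+2 -> odd n.+2 ->
  maximal_pt_abelian (Kset n m) H -> H ((omega n.+2)%:M).
Proof.
move=> m0 pp op mH; have wpr := omega_prim pp op.
case: (part1 m0 pp op mH) => [e | [xi [q gp e]]].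
- apply/e; apply/Tpow_E; exists (fun _ => omega n.+2); split; last exact: scal_E.
  by apply: Qc_root => //; apply: prim_expr_order.
- by apply/e; apply: gen_incl; left.
Qed.

Lemma mixed n m (HA HB : mset n.+2) xi M : (0 < m)%N -> prime n.+2 -> odd n.+2 ->
  meq HA (Tpow n.+2 1) -> Qc n m xi -> E xi 1 ^+ n.+2 = 1 -> meq HB (Gset xi) ->
  HA M -> HB M -> scal_omega n.+2 M.
Proof.
move=> m0 pp op eA q gp eB /eA /Tpow_E [eta [qe eM]] /eB GM.
have [a [j [zeta [eM' qz eM'']]]] := G_elem m0 pp op q gp GM.
have e0 : E eta 0 = E zeta (j%:R) by rewrite -eM'' -eM.
have [j0 _] := E_eq (fun i => Qc_nz i qe) e0.
apply/(scal_char pp op); exists a.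
by rewrite eM' (G_triv _ _ gp).
Qed.

Lemma part3 n m H1 H2 : (0 < m)%N -> prime n.+2 -> odd n.+2 ->
  maximal_pt_abelian (Kset n m) H1 -> maximal_pt_abelian (Kset n m) H2 ->
  ~ meq H1 H2 -> meq (fun M => H1 M /\ H2 M) (scal_omega n.+2).
Proof.
move=> m0 pp op mH1 mH2 ne M; split; last first.
  move=> sM; split.
    have [[sH _ _ _] _] := mH1.
    by apply: (gen_min sH _ sM) => N ->; apply: c_in_max mH1.
  have [[sH _ _ _] _] := mH2.
  by apply: (gen_min sH _ sM) => N ->; apply: c_in_max mH2.
case=> h1 h2.
case: (part1 m0 pp op mH1) => [e1 | [xi1 [q1 gp1 e1]]];
case: (part1 m0 pp op mH2) => [e2 | [xi2 [q2 gp2 e2]]].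
- by exfalso; apply: ne => N; rewrite e1 e2.
- exact: (mixed m0 pp op e1 q2 gp2 e2 h1 h2).
- exact: (mixed m0 pp op e2 q1 gp1 e1 h2 h1).
have [a [j [zeta1 [eA qA eA']]]] := G_elem m0 pp op q1 gp1 (proj1 (e1 M) h1).
have [b [k [zeta2 [eB qB eB']]]] := G_elem m0 pp op q2 gp2 (proj1 (e2 M) h2).
case: (eqVneq (j%:R : 'I_n.+2) 0) => [j0|j0].
  by apply/(scal_char pp op); exists a; rewrite eA (G_triv _ _ gp1).
have [jk _] := E_eq (fun i => Qc_nz i qA) (etrans (esym eA') eB').
have k0 : (k%:R : 'I_n.+2) != 0 by rewrite -jk.
have [sH1 _ _ _] := proj1 mH1.
have [sH2 _ _ _] := proj1 mH2.
have s12 : msub (Gset xi1) H2.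
  by apply: (@G_incl n xi1 H2 a j pp op gp1 sH2 (c_in_max m0 pp op mH2) _ j0); rewrite -eA.
have s21 : msub (Gset xi2) H1.
  by apply: (@G_incl n xi2 H1 b k pp op gp2 sH1 (c_in_max m0 pp op mH1) _ k0); rewrite -eB.
exfalso; apply: ne => N; split.
  by move/e1; apply: s12.
by move/e2; apply: s21.
Qed.

Lemma maxK_eq p (K K' H : mset p) : meq K K' -> maximal_pt_abelian K H -> maximal_pt_abelian K' H.
Proof.
move=> e [[sH HK ab pt] mx]; split.
  by split=> // M hM; apply/e; apply: HK.
move=> H' [s' HK' ab' pt'] sub; apply: mx => //; split=> // M hM.
by apply/e; apply: HK'.
Qed.

Theorem corollary1 (p m : nat) :
  prime p -> odd p -> (1 <= m)%N ->
  let Q := Tpow p m in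
  let K := KQ Q in
  [/\ (forall H, maximal_pt_abelian K H ->
         meq H (Tpow p 1) \/ exists S, Q S /\ meq H (gen_omega_SX S)),
      meq (center K) (scal_omega p) &
      (forall H1 H2, maximal_pt_abelian K H1 -> maximal_pt_abelian K H2 ->
         ~ meq H1 H2 -> meq (fun M => H1 M /\ H2 M) (scal_omega p))].
Proof.
case: p => [|[|n]] // pp op m0 Q K.
have eK : meq K (Kset n m) by apply: K_Kset.
have eK' : meq (Kset n m) K by move=> M; split=> /eK.
split.
- move=> H /(maxK_eq eK) mH; case: (part1 m0 pp op mH) => [e|[xi [q gp e]]].
    by left.
  by right; exists (E xi 0); split=> //; apply/Tpow_E; exists xi.
- move=> M; split.
    case=> KM cM; apply/(part2 m0 pp op); split; first by apply/eK.
    by move=> N /eK' KN; apply: cM.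
  move=> /(part2 m0 pp op) [KM cM]; split; first by apply/eK'.
  by move=> N /eK KN; apply: cM.
- move=> H1 H2 /(maxK_eq eK) mH1 /(maxK_eq eK) mH2 ne.
  exact: (part3 m0 pp op mH1 mH2 ne).
Qed.
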